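(* Let $n>k$ be integers with $n$ odd and $k$ even, and let $\mathbf{k^n}$ denote the degree sequence $(k,k,\dots,k)$ of length $n$. Then \[\underline{\mu}(\mathbf{k^n})=\begin{cases}k & \text{if } n<2k-3,\\ k-1 & \text{if } n=2k-3,\\ k/2 & \text{if } n\ge 2k-1.\end{cases}\]
   Context: All graphs are finite and simple. For a graph $G=(V,E)$ on $n$ vertices, a fractional vertex cover is a function $f:V\to[0,\infty)$ with $f(u)+f(v)\ge 1$ for every edge $uv\in E$; $\tau^*(G)$ denotes the minimum of $\sum_{v\in V}f(v)$ over all fractional vertex covers. For $E'\subseteq E$ let $G-E'=(V,E\setminus E')$. Define $\mu(G)=\min\{|E'| : E'\subseteq E,\ \tau^*(G-E')<n/2\}$ (equivalently, the minimum number of edges whose deletion leaves no perfect 2-matching, i.e. no spanning subgraph each of whose components is a $K_2$ or an odd cycle). For a graphical degree sequence $\mathbf d$, $\underline{\mu}(\mathbf d)$ is the minimum of $\mu(G)$ over all simple graphs $G$ realizing $\mathbf d$. *)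

(* Defs.v *)
From mathcomp Require Import all_boot all_order all_algebra.
From mathcomp Require Import reals Rstruct.
Set Implicit Arguments. Unset Strict Implicit. Unset Printing Implicit Defensive.
Import Order.TTheory GRing.Theory Num.Theory.
Local Open Scope ring_scope.

Notation RR := Rdefinitions.R.

Definition simple_graph (n : nat) (E : {set {set 'I_n}}) : Prop :=
  forall e, e \in E -> #|e| = 2%N.

Definition deg (n : nat) (E : {set {set 'I_n}}) (v : 'I_n) : nat :=
  #|[set e in E | v \in e]|.

Definition realizes_kn (n k : nat) (E : {set {set 'I_n}}) : Prop :=
  simple_graph E /\ forall v, deg E v = k.

Definition frac_cover (n : nat) (E : {set {set 'I_n}}) (f : 'I_n -> RR) : Prop :=
  (forall v, 0 <= f v) /\
  (forall u v : 'I_n, u != v -> [set u; v] \in E -> 1 <= f u + f v).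

Definition tau_star_lt (n : nat) (E : {set {set 'I_n}}) (c : RR) : Prop :=
  exists f : 'I_n -> RR, frac_cover E f /\ \sum_(v < n) f v < c.

Definition mu_set (n : nat) (E E' : {set {set 'I_n}}) : Prop :=
  E' \subset E /\ tau_star_lt (E :\: E') (n%:R / 2).

Definition is_mu (n : nat) (E : {set {set 'I_n}}) (m : nat) : Prop :=
  (exists E', mu_set E E' /\ #|E'| = m) /\
  (forall E', mu_set E E' -> (m <= #|E'|)%N).

Definition is_mu_low (n k m : nat) : Prop :=
  (exists E : {set {set 'I_n}}, realizes_kn k E /\ is_mu E m) /\
  (forall (E : {set {set 'I_n}}) (m' : nat), realizes_kn k E -> is_mu E m' -> (m <= m')%N).

(* Main.v *)
Require Import Defs.
From mathcomp Require Import all_boot all_order all_algebra.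
From mathcomp Require Import reals Rstruct.
From mathcomp Require Import lra zify.
Set Implicit Arguments. Unset Strict Implicit. Unset Printing Implicit Defensive.
Import Order.TTheory GRing.Theory Num.Theory.


Lemma sum_ind (n : nat) (A : {set 'I_n}) (t : RR) :
  (\sum_(v < n) (if v \in A then t else 0) = t * #|A|%:R)%R.
Proof.
rewrite -big_mkcond /= sumr_const mulr_natr //.
Qed.

Lemma meet2 (n : nat) (x y : 'I_n) (X : {set 'I_n}) :
  ([set x; y] :&: X != set0) = (x \in X) || (y \in X).
Proof.
apply/set0Pn/orP => [[w]|[h|h]].
  by rewrite !inE => /andP[/orP[/eqP->|/eqP->] h]; [left|right].
  by exists x; rewrite !inE eqxx h.
by exists y; rewrite !inE eqxx h orbT.
Qed.

Definition Eof (n : nat) (r : rel 'I_n) : {set {set 'I_n}} :=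
  [set e : {set 'I_n} | [exists u, exists v, r u v && (e == [set u; v])]].

Lemma Eof_inP (n : nat) (r : rel 'I_n) e :
  reflect (exists u v, r u v /\ e = [set u; v]) (e \in Eof r).
Proof.
rewrite inE; apply: (iffP existsP) => [[u /existsP[v /andP[ruv /eqP->]]]|[u [v [ruv ->]]]].
  by exists u, v.
by exists u; apply/existsP; exists v; rewrite ruv eqxx.
Qed.

Lemma Eof_simple (n : nat) (r : rel 'I_n) : irreflexive r -> simple_graph (Eof r).
Proof.
move=> irr e /Eof_inP[u [v [ruv ->]]]; rewrite cards2.
by case: eqP => // euv; subst v; rewrite irr in ruv.
Qed.

Lemma card_pred (n : nat) (P : pred 'I_n) : #|[set u | P u]| = (\sum_(u < n) P u)%N.
Proof.
rewrite -sum1_card big_mkcond /=; apply: eq_bigr => u _; rewrite inE.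
by case: (P u).
Qed.

Lemma deg_Eof (n : nat) (r : rel 'I_n) v : symmetric r -> irreflexive r ->
  deg (Eof r) v = (\sum_(u < n) r v u)%N.
Proof.
move=> sym irr; rewrite /deg -card_pred.
have -> : [set e in Eof r | v \in e] = (fun u => [set v; u]) @: [set u | r v u].
  apply/setP => e; rewrite inE; apply/andP/imsetP.
    move=> [/Eof_inP[a [b [rab ->]]]]; rewrite !inE => /orP[]/eqP ev; subst.
      by exists b; rewrite ?inE.
    by exists a; [rewrite inE sym | rewrite setUC].
  move=> [u]; rewrite inE => rvu ->; split; last by rewrite !inE eqxx.
  by apply/Eof_inP; exists v, u.
apply: card_in_imset => a b; rewrite !inE => rva rvb e.
have : a \in [set v; b] by rewrite -e !inE eqxx orbT.
rewrite !inE => /orP[]/eqP // eav; subst a.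
by rewrite irr in rva.
Qed.

Lemma mu_ub (n : nat) (E E' : {set {set 'I_n}}) (I S : {set 'I_n}) :
  E' \subset E -> (forall v, v \in I -> v \in S -> False) -> (#|S| < #|I|)%N ->
  (forall e, e \in E :\: E' -> e :&: I != set0 -> e :&: S != set0) ->
  mu_set E E'.
Proof.
move=> sE disj lt hyp; split => //.
pose f v : RR := (if v \in S then 1 else if v \in I then 0 else 1/2)%R.
exists f; split; first split.
- by move=> v; rewrite /f; case: (v \in S); case: (v \in I) => /=; lra.
- move=> u v uv e; have := hyp _ e; rewrite !meet2 /f.
  case: (u \in S); case: (v \in S); case: (u \in I); case: (v \in I) => /= H;
    first [lra | by move: (H isT)].
- have fE v : f v = (1/2 + ((if v \in S then 1/2 else 0) - (if v \in I then 1/2 else 0)))%R.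
    rewrite /f; case vS: (v \in S); case vI: (v \in I) => //; try lra.
    by exfalso; exact: (disj v).
  rewrite (eq_bigr _ (fun v _ => fE v)) big_split /= sumrB !sum_ind sumr_const card_ord.
  have : (#|S|%:R + 1 <= #|I|%:R :> RR)%R.
    by rewrite natr1 ler_nat.
  rewrite -mulr_natr; lra.
Qed.

Definition mval (n k : nat) : nat :=
  if (n + 3 < 2 * k)%N then k else if (n + 3 == 2 * k)%N then k.-1 else k./2.

Lemma arith_big (k i s a b c : nat) : (s.+1 = i)%N -> (3 <= i)%N -> (i < k)%N ->
  (k * i <= a + b + c)%N -> (a <= i * s)%N -> (c <= b)%N ->
  (k.-1 <= b)%N /\ ((i.+2 <= k)%N -> (4 <= i)%N \/ (6 <= k)%N -> (k <= b)%N).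
Proof.
move=> si i3 ik kabc ais cb.
have [x ex] : exists x, i = x + 3 by exists (i - 3); lia.
have [y ey] : exists y, k = x + y + 4 by exists (k - x - 4); lia.
subst i k.
have es : s = x + 2 by lia.
subst s.
split.
  simpl; nia.
move=> h1 h2.
have : (2 <= (x + 1) * y)%N.
  case: h2 => h2.
  - have : (1 <= y)%N by lia.
    have : (1 <= x)%N by lia.
    nia.
  - nia.
nia.
Qed.

Lemma arith (n k i s a b c : nat) : (k < n)%N -> odd n -> ~~ odd k -> (s < i)%N ->
  (i + s <= n)%N -> (k * i <= a + b + c)%N -> (a <= k * s)%N -> (a <= i * s)%N ->
  (c.*2 <= i * (i - 1))%N -> (c <= b)%N -> (mval n k <= b)%N.
Proof.
move=> kn on ek si isn kabc aks ais ci cb.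
have [h kh] : exists h, k = h.*2.
  by exists k./2; rewrite -[k in LHS]odd_double_half (negbTE ek).
have [q nq] : exists q, n = q.*2.+1.
  by exists n./2; rewrite -[n in LHS]odd_double_half on add1n.
have k2b : (k * (i - s) <= b.*2)%N.
  have : (k * i <= k * s + b.*2)%N by lia.
  rewrite mulnBr; lia.
have Hk : (k * 2 <= k * (i - s))%N -> (k <= b)%N.
  move=> H; have := leq_trans H k2b; lia.
rewrite /mval.
case: ifP => [lt|_]; last case: ifP => [eq|_].
- case: (leqP (s + 2) i) => [si2|si2].
    by apply: Hk; rewrite leq_mul2l; apply/orP; right; lia.
  have es : s.+1 = i by lia.
  case: (ltnP i 3) => i3.
    have : (i = 1 \/ i = 2)%N by lia.
    case=> ei; subst i.
      have es0 : s = 0%N by lia.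
      subst s; lia.
    have es0 : s = 1%N by lia.
    subst s; lia.
  have [_ H] := @arith_big k i s a b c es i3 ltac:(lia) kabc ais cb.
  apply: H; lia.
- case: (leqP (s + 2) i) => [si2|si2].
    have := Hk ltac:(by rewrite leq_mul2l; apply/orP; right; lia); lia.
  have es : s.+1 = i by lia.
  case: (ltnP i 3) => i3.
    have : (i = 1 \/ i = 2)%N by lia.
    case=> ei; subst i.
      have es0 : s = 0%N by lia.
      subst s; lia.
    have es0 : s = 1%N by lia.
    subst s; lia.
  have [H _] := @arith_big k i s a b c es i3 ltac:(lia) kabc ais cb.
  exact: H.
- have : (k * 1 <= k * (i - s))%N.
    by rewrite leq_mul2l; apply/orP; right; lia.
  have -> : k./2 = h by rewrite kh doubleK.
  lia.
Qed.

Section Ring2.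
Local Open Scope ring_scope.


Lemma half_int (n : nat) (H : {set {set 'I_n}}) (f : 'I_n -> RR) :
  frac_cover H f -> \sum_(v < n) f v < n%:R / 2 ->
  exists I S : {set 'I_n}, (forall v, v \in I -> v \in S -> False) /\ (#|S| < #|I|)%N /\
    (forall u v, u != v -> [set u; v] \in H -> u \in I -> v \in S).
Proof.
have [N] := ubnP #|[set v | f v != 1/2]|.
elim: N f => // N IH f HN [f0 cov] sf.
set P := [set v | 1/2 < f v]; set Nn := [set v | f v < 1/2].
case: (ltnP #|P| #|Nn|) => [lt|ge].
  exists Nn, P; split; last split => //.
    by move=> v; rewrite !inE => a b; lra.
  move=> u v uv e; rewrite !inE => fu.
  have := cov u v uv e; lra.
case: (set_0Vmem [set v | f v != 1/2]) => [e0|[v1]].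
  have : \sum_(v < n) f v = n%:R / 2.
    rewrite (eq_bigr (fun _ => 1/2)); last first.
      move=> v _; case: (f v =P 1/2) => // /eqP ne.
      have : v \in [set v | f v != 1/2] by rewrite inE.
      by rewrite e0 inE.
    by rewrite sumr_const card_ord mulr_natl -mulr_natr mul1r.
  lra.
rewrite inE => Hv1.
have [v0 Pv0 Hmin] := @arg_minP _ RR _ v1 [pred v | f v != 1/2] (fun v => `|f v - 1/2|) Hv1.
set t := `|f v0 - 1/2|.
have tpos : 0 < t by rewrite normr_gt0 subr_eq0.
have tP v : 1/2 < f v -> t <= f v - 1/2.
  move=> h; have hv : f v != 1/2 by rewrite gt_eqF.
  by have := Hmin v hv; rewrite /= [`|f v - _|]gtr0_norm ?subr_gt0.
have tN v : f v < 1/2 -> t <= 1/2 - f v.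
  move=> h; have hv : f v != 1/2 by rewrite lt_eqF.
  by have := Hmin v hv; rewrite /= [`|f v - _|]ltr0_norm ?subr_lt0 // opprB.
pose g v := if 1/2 < f v then f v - t else if f v < 1/2 then f v + t else f v.
have gf v : g v = f v + ((if v \in Nn then t else 0) - (if v \in P then t else 0)).
  rewrite /g !inE; case: ifP => h1; case: ifP => h2; lra.
have gP v : 1/2 < f v -> g v = f v - t by rewrite /g => ->.
have gN v : f v < 1/2 -> g v = f v + t.
  by move=> h; rewrite /g h ifF //; apply/negbTE; rewrite -leNgt; lra.
have gZ v : f v = 1/2 -> g v = f v by move=> e; rewrite /g e ltxx.
have gC v : (f v < 1/2 /\ g v = f v + t) \/ (1/2 < f v /\ g v = f v - t) \/ (f v = 1/2 /\ g v = f v).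
  by case: (ltgtP (f v) (1/2)) => h; [left|right;left|right;right]; split => //;
   [apply: gN|apply: gP|apply: gZ].
apply: (IH g).
- rewrite -ltnS; apply: leq_trans HN; apply: proper_card; apply/properP; split.
    apply/subsetP => v; rewrite !inE; apply: contra => /eqP e.
    by rewrite /g e ltxx.
  exists v0; rewrite !inE //.
  rewrite negbK /g; apply/eqP.
  move: tpos; rewrite /t.
  case: ifP => h1; first by rewrite gtr0_norm ?subr_gt0 //; lra.
  case: ifP => h2; first by rewrite ltr0_norm ?subr_lt0 //; lra.
  move=> _; lra.
- split.
    move=> v; have := f0 v; have := tP v; have := tN v.
    case: (gC v) => [[h1 ->]|[[h1 ->]|[h1 ->]]]; lra.
  move=> u v uv e; have := cov u v uv e.
  have := tP u; have := tN u; have := tP v; have := tN v.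
  case: (gC u) => [[h1 ->]|[[h1 ->]|[h1 ->]]];
  case: (gC v) => [[h2 ->]|[[h2 ->]|[h2 ->]]]; lra.
- rewrite (eq_bigr _ (fun v _ => gf v)) big_split /= sumrB !sum_ind.
  have : (t * #|Nn|%:R <= t * #|P|%:R) by rewrite ler_pM2l // ler_nat.
  lra.
Qed.

End Ring2.

Lemma dcount (n : nat) (E : {set {set 'I_n}}) (X : {set 'I_n}) :
  \sum_(v in X) deg E v = \sum_(e in E) #|e :&: X|.
Proof.
rewrite /deg.
have h1 v : #|[set e in E | v \in e]| = \sum_(e in E) (v \in e).
  rewrite -sum1_card big_mkcond [RHS]big_mkcond /=.
  by apply: eq_bigr => e _; rewrite inE; case: (e \in E); case: (v \in e).
have h2 e : #|e :&: X| = \sum_(v in X) (v \in e).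
  rewrite -sum1_card big_mkcond [RHS]big_mkcond /=.
  by apply: eq_bigr => v _; rewrite inE; case: (v \in e); case: (v \in X).
rewrite (eq_bigr _ (fun v _ => h1 v)) exchange_big /=.
by apply: eq_bigr => e _; rewrite h2.
Qed.

Lemma card2I (n : nat) (x y : 'I_n) (X : {set 'I_n}) : x != y ->
  #|[set x; y] :&: X| = ((x \in X) + (y \in X))%N.
Proof.
move=> xy.
case xX: (x \in X); case yX: (y \in X).
- have -> : [set x; y] :&: X = [set x; y].
    by apply/setIidPl; rewrite subUset !sub1set xX yX.
  by rewrite cards2 xy.
- have -> : [set x; y] :&: X = [set x].
    apply/setP => w; rewrite !inE; case: (w =P x) => [->|]; rewrite ?xX //=.
    by case: (w =P y) => [->|]; rewrite ?yX.
  by rewrite cards1.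
- have -> : [set x; y] :&: X = [set y].
    apply/setP => w; rewrite !inE; case: (w =P y) => [->|]; rewrite ?yX ?orbT //=.
    by case: (w =P x) => [->|]; rewrite ?xX.
  by rewrite cards1.
- have -> : [set x; y] :&: X = set0.
    apply/setP => w; rewrite !inE; case: (w =P y) => [->|]; rewrite ?yX ?andbF //=.
    by case: (w =P x) => [->|]; rewrite ?xX.
  by rewrite cards0.
Qed.

Lemma edge_eq (n : nat) (e : {set 'I_n}) (w z : 'I_n) :
  #|e| = 2%N -> w \in e -> z \in e -> w != z -> e = [set w; z].
Proof.
move=> c2 we ze wz; apply/eqP; rewrite eq_sym eqEcard subUset !sub1set we ze /=.
by rewrite cards2 wz c2.
Qed.

Lemma sum_mem (T : finType) (A E : {set T}) : A \subset E ->
  (\sum_(e in E) (e \in A) = #|A|)%N.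
Proof.
move=> sAE; rewrite -sum1_card [RHS]big_mkcond [LHS]big_mkcond /=.
apply: eq_bigr => e _; case eA: (e \in A); last by case: (e \in E).
by rewrite (subsetP sAE e eA).
Qed.

Lemma count_main (n k : nat) (E E' : {set {set 'I_n}}) (I S : {set 'I_n}) :
  realizes_kn k E -> E' \subset E -> (forall v, v \in I -> v \in S -> False) ->
  (forall u v, u != v -> [set u; v] \in E :\: E' -> u \in I -> v \in S) ->
  exists a b c, [/\ (k * #|I| <= a + b + c)%N, (a <= k * #|S|)%N, (a <= #|I| * #|S|)%N,
    (c.*2 <= #|I| * (#|I| - 1))%N & (c <= b)%N /\ (b <= #|E'|)%N].
Proof.
move=> [simp degk] sE' disj hyp.
set A := [set e in E | (e :&: I != set0) && (e :&: S != set0)].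
set B := [set e in E | (e :&: I != set0) && (e :&: S == set0)].
set Bin := [set e in E | e \subset I].
have edge e : e \in E -> exists x y, x != y /\ e = [set x; y].
  by move/simp/eqP/cards2P.
have sA : A \subset E by apply/subsetP => e; rewrite inE => /andP[].
have sB : B \subset E by apply/subsetP => e; rewrite inE => /andP[].
have sBin : Bin \subset E by apply/subsetP => e; rewrite inE => /andP[].
have dI (X : {set 'I_n}) : (\sum_(v in X) deg E v = k * #|X|)%N.
  by rewrite (eq_bigr _ (fun v _ => degk v)) sum_nat_const mulnC.
exists #|A|, #|B|, #|Bin|; split.
- rewrite -dI dcount -(sum_mem sA) -(sum_mem sB) -(sum_mem sBin) -!big_split /=.
  apply: leq_sum => e eE; have [x [y [xy ee]]] := edge e eE; subst e.
  rewrite card2I // !inE eE -[_ :&: S == set0]negbK !meet2 !subUset !sub1set /=.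
  move: (disj x) (disj y).
  case: (x \in I); case: (x \in S); case: (y \in I); case: (y \in S) => /= h1 h2;
    first [done | exfalso; first [exact: h1 | exact: h2]].
- rewrite -dI dcount -(sum_mem sA); apply: leq_sum => e eE.
  case eA: (e \in A) => //; rewrite card_gt0.
  by move: eA; rewrite inE => /and3P[].
- apply: (leq_trans _ (_ : #|(fun p => [set p.1; p.2]) @: setX I S| <= _)%N); last first.
    by rewrite -cardsX leq_imset_card.
  apply: subset_leq_card; apply/subsetP => e; rewrite inE => /and3P[eE /set0Pn[w]].
  rewrite inE => /andP[we wI] /set0Pn[z]; rewrite inE => /andP[ze zS].
  apply/imsetP; exists (w, z); first by rewrite inE /= wI zS.
  apply: edge_eq => //; first exact: simp.
  by apply/negP => /eqP /= ewz; rewrite -ewz in zS; exact: (disj w wI zS).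
- have : (#|Bin| <= 'C(#|I|, 2))%N.
    rewrite -cards_draws; apply: subset_leq_card; apply/subsetP => e.
    by rewrite !inE => /andP[eE ->]; rewrite simp.
  rewrite bin2 => h.
  have := odd_double_half (#|I| * #|I|.-1); lia.
split.
- apply: subset_leq_card; apply/subsetP => e; rewrite inE => /andP[eE].
  have [x [y [xy ee]]] := edge e eE; subst e.
  rewrite subUset !sub1set => /andP[xI yI].
  rewrite inE eE meet2 xI /= -[_ == set0]negbK meet2.
  by apply/negP => /orP[] h; [exact: (disj x) | exact: (disj y)].
- apply: subset_leq_card; apply/subsetP => e; rewrite inE => /and3P[eE].
  have [x [y [xy ee]]] := edge e eE; subst e.
  rewrite meet2 -[_ == set0]negbK meet2 => /orP[] h /negP hS;
    apply: contraT => nE'; exfalso; apply: hS.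
    by apply/orP; right; apply: (hyp x y) => //; rewrite inE nE'.
  apply/orP; left; apply: (hyp y x) => //; first by rewrite eq_sym.
  by rewrite setUC inE nE'.
Qed.

Lemma sum_bij (n : nat) (g : nat -> nat) (P : pred nat) :
  (forall t, t < n -> g t < n) ->
  (forall t t', t < n -> t' < n -> g t = g t' -> t = t') ->
  \sum_(t < n) P (g t) = \sum_(t < n) P t.
Proof.
move=> gb ginj.
pose h (t : 'I_n) : 'I_n := Ordinal (gb t (ltn_ord t)).
have hinj : injective h.
  by move=> a b [] /ginj e; apply: val_inj; apply: e.
by rewrite [RHS](reindex_inj hinj).
Qed.

Lemma sum_shift (n c : nat) (P : pred nat) : 0 < n ->
  \sum_(t < n) P ((t + c) %% n) = \sum_(t < n) P t.
Proof.
move=> n0; apply: (@sum_bij n (fun t => (t + c) %% n)) => [t _|t t' tn t'n]; first by rewrite ltn_pmod.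
move/eqP; rewrite eqn_modDr => /eqP; rewrite !modn_small //.
Qed.

Lemma sum_refl (n c : nat) (P : pred nat) : c < n ->
  \sum_(t < n) P ((c + n - t) %% n) = \sum_(t < n) P t.
Proof.
move=> cn; apply: (@sum_bij n (fun t => (c + n - t) %% n)) => [t tn|t t' tn t'n]; first by rewrite ltn_pmod //; lia.
move/eqP => e.
have : (c + n - t + t + t') %% n == (c + n - t' + t' + t) %% n.
  by rewrite -addnA -[in X in _ == X]addnA [t' + t]addnC -modnDml (eqP e) modnDml.
have -> : c + n - t + t + t' = t' + (c + n) by lia.
have -> : c + n - t' + t' + t = t + (c + n) by lia.
by rewrite eqn_modDr !modn_small // => /eqP.
Qed.

Lemma sum_ltk (n k : nat) : \sum_(t < n) (t < k) = minn n k.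
Proof.
elim: n => [|n IH]; first by rewrite big_ord0 min0n.
rewrite big_ord_recr /= IH; case: (ltnP n k) => h; lia.
Qed.

Lemma sum_eq1 (n c : nat) (Q : pred nat) :
  \sum_(u < n) (Q u && (u == c :> nat)) = Q c && (c < n).
Proof.
elim: n => [|n IH]; first by rewrite big_ord0 andbF.
rewrite big_ord_recr /= IH.
case: (ltngtP n c) => h.
- by rewrite ltnS leqNgt h !andbF.
- by rewrite ltnS ltnW // andbF addn0.
- by rewrite h ltnS leqnn andbF andbT.
Qed.

Lemma sum_or (n : nat) (a b : pred nat) : (forall u, u < n -> ~~ (a u && b u)) ->
  \sum_(u < n) (a u || b u) = \sum_(u < n) a u + \sum_(u < n) b u.
Proof.
move=> ex; rewrite -big_split /=; apply: eq_bigr => u _.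
by move: (ex u (ltn_ord u)); case: (a u); case: (b u).
Qed.

Lemma sum_low (n p : nat) (Q : pred nat) : p <= n ->
  \sum_(u < n) ((u < p) && Q u) = \sum_(u < p) Q u.
Proof.
move=> pn; rewrite -(big_mkord (fun _ => true) (fun u => nat_of_bool ((u < p) && Q u))) -(big_mkord (fun _ => true) (fun u => nat_of_bool (Q u))).
rewrite (@big_cat_nat _ _ _ p 0 n _ _ (leq0n p) pn) /=.
rewrite [X in _ + X = _]big_nat_cond [X in _ + X = _]big1 ?addn0.
  by rewrite big_nat_cond [RHS]big_nat_cond; apply: eq_bigr => i /andP[/andP[_ ->]].
by move=> i /andP[/andP[pi _] _]; rewrite ltnNge pi.
Qed.

Lemma sum_high (n p : nat) (Q : pred nat) : p <= n ->
  \sum_(u < n) ((p <= u) && Q u) = \sum_(j < n - p) Q (j + p).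
Proof.
move=> pn; rewrite -(big_mkord (fun _ => true) (fun u => nat_of_bool ((p <= u) && Q u))).
rewrite -(big_mkord (fun _ => true) (fun j => nat_of_bool (Q (j + p)))).
rewrite (@big_cat_nat _ _ _ p 0 n _ _ (leq0n p) pn) /=.
rewrite big_nat_cond big1 ?add0n; last first.
  by move=> i /andP[/andP[_ ip] _]; rewrite leqNgt ip.
rewrite -{1}[p]add0n big_addn big_nat_cond [RHS]big_nat_cond.
by apply: eq_bigr => i _; rewrite leq_addl.
Qed.


Lemma LB (n k : nat) (E E' : {set {set 'I_n}}) : (k < n)%N -> odd n -> ~~ odd k ->
  realizes_kn k E -> mu_set E E' -> (mval n k <= #|E'|)%N.
Proof.
move=> kn on ek rk [sE [f [cov sf]]].
have [I [S [disj [lt hyp]]]] := half_int cov sf.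
have [a [b [c [h1 h2 h3 h4 [h5 h6]]]]] := count_main rk sE disj hyp.
have isn : (#|I| + #|S| <= n)%N.
  rewrite -cardsUI.
  have -> : I :&: S = set0.
    by apply/setP => v; rewrite !inE; apply/negP => /andP[x y]; exact: (disj v).
  by rewrite cards0 addn0 -[X in (_ <= X)%N]card_ord max_card.
apply: leq_trans h6.
exact: (arith kn on ek lt isn h1 h2 h3 h4 h5).
Qed.


Lemma realize_rel (n k : nat) (r : rel 'I_n) : symmetric r -> irreflexive r ->
  (forall v : 'I_n, \sum_(u < n) r v u = k)%N -> realizes_kn k (Eof r).
Proof.
move=> sym irr dg; split; first exact: Eof_simple.
by move=> v; rewrite deg_Eof.
Qed.

Definition r2 (s k : nat) (u v : nat) : bool :=
  ((u < s.+1) && (s.+1 <= v) && ((u + (v - s)) %% s.+1 < k)) ||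
  ((u < k./2) && (v == u + k./2)).

Lemma sum_P0h (n h : nat) : h < n ->
  \sum_(x < n) ((0 < x) && (x <= h)) = h.
Proof.
move=> hn.
have := sum_ltk n h.+1.
rewrite (eq_bigr (fun x : 'I_n => nat_of_bool ((x < 1) || ((0 < x) && (x <= h))))); last first.
  by move=> x _; case: x => [[|x]] //=.
rewrite (@sum_or n (fun x => x < 1) (fun x => (0 < x) && (x <= h))); last by move=> [|x].
rewrite sum_ltk; lia.
Qed.

Lemma deg2 (s k v : nat) : (k <= s.+1)%N -> ~~ odd k -> v < s + s.+1 ->
  \sum_(u < s + s.+1) (r2 s k v u || r2 s k u v) = k.
Proof.
move=> kp ek vn.
have [h kh] : exists h, k = h.*2.
  by exists k./2; rewrite -[k in LHS]odd_double_half (negbTE ek).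
have hk : k./2 = h by rewrite kh doubleK.
rewrite /r2 hk.
case: (ltnP v s.+1) => vp.
- rewrite (eq_bigr (fun u : 'I_(s + s.+1) =>
     ((s.+1 <= u) && ((v + (u - s)) %% s.+1 < k) : nat) +
     ((v < h) && (u == v + h :> nat) : nat) + ((u < h) && (v == u + h) : nat))); last first.
    move=> u _; rewrite /= ?andbF /=.
    case: ((v + (u - s)) %% s.+1 < k);
    case E1: (s.+1 <= u); case E2: (v < h); case E3: (u == v + h :> nat);
    case E4: (u < h); case E5: (v == u + h); rewrite //=; lia.
  rewrite !big_split /=.
  rewrite (@sum_high _ s.+1 (fun u => (v + (u - s)) %% s.+1 < k)); last lia.
  have -> : s + s.+1 - s.+1 = s by lia.
  rewrite (eq_bigr (fun j : 'I_s => nat_of_bool (((j.+1 + v) %% s.+1) < k))); last first.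
    by move=> j _; congr (nat_of_bool (_ < _)); congr (_ %% _); lia.
  have e1 := sum_shift v (fun x => x < k) (ltn0Sn s).
  rewrite big_ord_recl /= sum_ltk add0n modn_small // (minn_idPr kp) in e1.
  rewrite (eq_bigr (fun i : 'I_s => nat_of_bool ((i.+1 + v) %% s.+1 < k))) in e1; last first.
    by move=> i _; rewrite /bump add1n.
  rewrite (eq_bigr (fun u : 'I_(s + s.+1) => nat_of_bool ((fun _ => v < h) u && (u == v + h :> nat))));
    last by [].
  rewrite (@sum_eq1 _ _ (fun _ => v < h)).
  rewrite (eq_bigr (fun u : 'I_(s + s.+1) => nat_of_bool ((fun _ => (h <= v) && (v - h < h)) u && (u == v - h :> nat))));
    last first.
    move=> u _ /=; case E1: (u < h); case E2: (v == u + h); case E3: (h <= v);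
    case E4: (v - h < h); case E5: (u == v - h :> nat); rewrite //=; lia.
  rewrite (@sum_eq1 _ _ (fun _ => (h <= v) && (v - h < h))).
  move: e1; case E1: (v < k); case E2: (v < h); case E3: (h <= v); case E4: (v - h < h);
    case E5: (v + h < s + s.+1); case E6: (v - h < s + s.+1); rewrite /= ?addn0 ?add0n; lia.
- rewrite (eq_bigr (fun u : 'I_(s + s.+1) => nat_of_bool ((u < s.+1) && ((u + (v - s)) %% s.+1 < k)))); last first.
    move=> u _; rewrite /= ?andbF ?andbT /= ?orbF.
    case: ((u + (v - s)) %% s.+1 < k);
    case E1: (u < s.+1); case E2: (v < h); case E3: (u == v + h :> nat);
    case E4: (u < h); case E5: (v == u + h); rewrite //=; lia.
  rewrite (@sum_low _ s.+1 (fun u => (u + (v - s)) %% s.+1 < k)); last lia.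
  by rewrite (sum_shift (v - s) (fun x => x < k) (ltn0Sn s)) sum_ltk; lia.
Qed.

Lemma card_lt (n p : nat) : p <= n -> #|[set u : 'I_n | u < p]| = p.
Proof. by move=> pn; rewrite card_pred sum_ltk; apply/minn_idPr. Qed.

Lemma notsub_meet (n : nat) (e : {set 'I_n}) (I : {set 'I_n}) :
  ~~ (e \subset I) -> e :&: ~: I != set0.
Proof.
case/subsetPn => w we wI; apply/set0Pn; exists w; by rewrite !inE we wI.
Qed.

Lemma constr2 (n k : nat) : odd n -> ~~ odd k -> (k <= n./2.+1)%N ->
  exists E E' : {set {set 'I_n}}, [/\ realizes_kn k E, mu_set E E' & (#|E'| <= k./2)%N].
Proof.
move=> on ek kp.
have [s ns] : exists s, n = s + s.+1.
  by exists n./2; have := odd_double_half n; rewrite on -addnn; lia.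
have e2 : n./2 = s by have := odd_double_half n; rewrite on -addnn; lia.
rewrite e2 in kp; subst n.
have [h kh] : exists h, k = h.*2.
  by exists k./2; rewrite -[k in LHS]odd_double_half (negbTE ek).
have hk : k./2 = h by rewrite kh doubleK.
pose R : rel 'I_(s + s.+1) := fun u v => r2 s k u v || r2 s k v u.
have symR : symmetric R by move=> u v; rewrite /R orbC.
have irrR : irreflexive R.
  move=> u; rewrite /R orbb /r2 hk; apply/negbTE.
  case E1: (u < s.+1); case E2: (s.+1 <= u); case E3: (u < h); case E4: (u == u + h :> nat);
    rewrite //=; lia.
have rk : realizes_kn k (Eof R).
  apply: realize_rel => // v; exact: deg2.
set I := [set u : 'I_(s + s.+1) | u < s.+1].
have cI : #|I| = s.+1 by apply: card_lt; lia.
have cS : #|~: I| = s.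
  have := cardsC I; rewrite cI card_ord; lia.
exists (Eof R), [set e in Eof R | e \subset I]; split => //.
  apply: (mu_ub (I := I) (S := ~: I)).
  - by apply/subsetP => e; rewrite inE => /andP[].
  - by move=> v; rewrite !inE => ->.
  - by rewrite cI cS.
  - move=> e; rewrite !inE => /andP[/negP nE' eE] _; apply: notsub_meet.
    by apply/negP => sub; apply: nE'; rewrite eE sub.
pose g (u : 'I_(s + s.+1)) := [set u; insubd u (u + h)].
apply: (leq_trans (_ : _ <= #|g @: [set u : 'I_(s + s.+1) | u < h]|)%N).
  apply: subset_leq_card; apply/subsetP => e; rewrite inE => /andP[/Eof_inP[a [b [rab ->]]]].
  rewrite subUset !sub1set !inE => /andP[aI bI].
  move: rab; rewrite /R /r2 hk => /orP[]/orP[].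
  - by move=> /andP[/andP[_ sb] _]; exfalso; lia.
  - move=> /andP[ah /eqP eb]; apply/imsetP; exists a; first by rewrite inE.
    congr [set _; _]; apply: val_inj; rewrite /= val_insubd; case: ifP => H; lia.
  - by move=> /andP[/andP[_ sb] _]; exfalso; lia.
  - move=> /andP[bh /eqP ea]; apply/imsetP; exists b; first by rewrite inE.
    rewrite setUC; congr [set _; _]; apply: val_inj; rewrite /= val_insubd; case: ifP => H; lia.
rewrite hk; apply: leq_trans (leq_imset_card _ _) _.
by rewrite card_lt //; lia.
Qed.



Definition r1 (n h : nat) (u v : nat) : bool :=
  (0 < (v + n - u) %% n) && ((v + n - u) %% n <= h).

Lemma deg1 (n h v : nat) : h.*2 < n -> v < n ->
  \sum_(u < n) (r1 n h v u || r1 n h u v) = h.*2.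
Proof.
move=> hn vn.
rewrite (@sum_or n (fun u => r1 n h v u) (fun u => r1 n h u v)); last first.
  move=> u un; rewrite /r1.
  case: (ltngtP u v) => uv.
  - rewrite (modn_small (_ : u + n - v < n)); last lia.
    rewrite (_ : v + n - u = v - u + n); last lia.
    rewrite modnDr modn_small; last lia.
    apply/negP => /andP[/andP[_ h1] /andP[_ h2]]; lia.
  - rewrite (modn_small (_ : v + n - u < n)); last lia.
    rewrite (_ : u + n - v = u - v + n); last lia.
    rewrite modnDr modn_small; last lia.
    apply/negP => /andP[/andP[_ h1] /andP[_ h2]]; lia.
  - by rewrite uv addKn modnn.
rewrite /r1.
rewrite (eq_bigr (fun u : 'I_n => nat_of_bool ((fun x => (0 < x) && (x <= h)) ((u + (n - v)) %% n))));
  last by move=> u _ /=; rewrite addnBA // ltnW.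
rewrite (@sum_shift n (n - v) (fun x => (0 < x) && (x <= h))); last lia.
rewrite (@sum_refl n v (fun x => (0 < x) && (x <= h))) //.
rewrite sum_P0h; last lia.
by rewrite addnn.
Qed.

Lemma constr1 (n k : nat) : (k < n)%N -> ~~ odd k ->
  exists E E' : {set {set 'I_n}}, [/\ realizes_kn k E, mu_set E E' & (#|E'| <= k)%N].
Proof.
move=> kn ek.
have [h kh] : exists h, k = h.*2.
  by exists k./2; rewrite -[k in LHS]odd_double_half (negbTE ek).
pose R : rel 'I_n := fun u v => r1 n h u v || r1 n h v u.
have symR : symmetric R by move=> u v; rewrite /R orbC.
have irrR : irreflexive R by move=> u; rewrite /R orbb /r1 addKn modnn.
have rk : realizes_kn k (Eof R).
  apply: realize_rel => // v; rewrite kh; apply: deg1 => //; lia.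
have n0 : 0 < n by lia.
pose v0 : 'I_n := Ordinal n0.
exists (Eof R), [set e in Eof R | v0 \in e]; split => //; last first.
  by case: rk => _ /(_ v0); rewrite /deg => ->.
apply: (mu_ub (I := [set v0]) (S := set0)).
- by apply/subsetP => e; rewrite inE => /andP[].
- by move=> v; rewrite !inE.
- by rewrite cards0 cards1.
- move=> e; rewrite !inE => /andP[nE' eE] /set0Pn[w]; rewrite !inE => /andP[we /eqP ev].
  by subst w; rewrite eE we in nE'.
Qed.


Definition r3 (q : nat) (u v : nat) : bool :=
  ((u < q.*2.+1) && (q.*2.+1 <= v)) ||
  ((u < q.*2.+1) && (v < q.*2.+1) && (v == u.+1 %% q.*2.+1)) ||
  ((q.*2.+1 <= u) && (u < q.*2.+1 + q) && (v == u + q)).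

Lemma modS (p v : nat) : v < p -> v.+1 %% p = if v.+1 == p then 0 else v.+1.
Proof. by move=> vp; case: eqP => [->|ne]; [rewrite modnn | rewrite modn_small; lia]. Qed.

Lemma cyc (p u v : nat) : u < p -> v < p -> 3 <= p -> u = v.+1 %% p -> v = u.+1 %% p -> False.
Proof.
move=> up vp p3; rewrite (modS up) (modS vp).
case: eqP => e1; case: eqP => e2; lia.
Qed.

Lemma deg3 (q v : nat) : 1 <= q -> v < q.*2.+1 + q.*2 ->
  \sum_(u < q.*2.+1 + q.*2) (r3 q v u || r3 q u v) = (q.+1).*2.
Proof.
move=> q1 vn; set p := q.*2.+1; set n := p + q.*2.
have p3 : 3 <= p by rewrite /p; lia.
rewrite /r3 -/p.
case: (ltnP v p) => vp.
- rewrite (eq_bigr (fun u : 'I_n => ((p <= u) : nat) + ((u < p) && (u == v.+1 %% p :> nat) : nat)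
      + ((u < p) && (v == u.+1 %% p) : nat))); last first.
    move=> u _; case: (ltnP u p) => up /=.
      rewrite ?andbF ?orbF /=.
      have := @cyc p u v up vp p3.
      by case: eqP => e1; case: eqP => e2 //= /(_ e1 e2).
    by rewrite ?andbF ?orbF ?andbT /=.
  rewrite !big_split /=.
  rewrite (eq_bigr (fun u : 'I_n => nat_of_bool ((p <= u) && (fun _ => true) u)));
    last by move=> u _; rewrite andbT.
  rewrite (@sum_high _ p (fun _ => true)); last lia.
  rewrite sum_nat_const card_ord muln1.
  rewrite (@sum_eq1 _ _ (fun u => u < p)) ltn_pmod; last lia.
  rewrite (@sum_low _ p (fun u => v == u.+1 %% p)); last lia.
  rewrite (eq_bigr (fun u : 'I_p => nat_of_bool ((fun x => x == v) ((u + 1) %% p))));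
    last by move=> u _; rewrite addn1 eq_sym.
  rewrite (@sum_shift p 1 (fun x => x == v)); last lia.
  rewrite (eq_bigr (fun u : 'I_p => nat_of_bool ((fun _ => true) u && (u == v :> nat)))) //.
  rewrite (@sum_eq1 _ _ (fun _ => true)) vp /=.
  have : (v.+1 %% p < n) by apply: leq_trans (ltn_pmod _ _) _; lia.
  move=> ->; rewrite /n; lia.
- rewrite (eq_bigr (fun u : 'I_n => ((u < p) : nat) + ((v < p + q) && (u == v + q :> nat) : nat)
      + ((p + q <= v) && (u == v - q :> nat) : nat))); last first.
    move=> u _; case: (ltnP u p) => up /=; rewrite ?andbF ?orbF ?andbT /=.
      case E1: (v < p + q); case E2: (u == v + q :> nat); case E3: (p + q <= v);
        case E4: (u == v - q :> nat); rewrite //=; lia.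
    case E1: (v < p + q); case E2: (u == v + q :> nat); case E3: (p + q <= v);
      case E4: (u == v - q :> nat); case E5: (u < p + q); case E6: (v == u + q);
      rewrite //=; lia.
  rewrite !big_split /=.
  rewrite sum_ltk (@sum_eq1 _ _ (fun _ => v < p + q)) (@sum_eq1 _ _ (fun _ => p + q <= v)).
  case E1: (v < p + q); case E3: (p + q <= v); case E2: (v + q < n); case E4: (v - q < n);
    rewrite /= /n /p; lia.
Qed.

Lemma constr3 (n k : nat) : ~~ odd k -> (n + 3 = 2 * k)%N -> (k < n)%N ->
  exists E E' : {set {set 'I_n}}, [/\ realizes_kn k E, mu_set E E' & (#|E'| <= k.-1)%N].
Proof.
move=> ek nk kn.
have [h kh] : exists h, k = h.*2.
  by exists k./2; rewrite -[k in LHS]odd_double_half (negbTE ek).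
have [q hq] : exists q, h = q.+1 by exists h.-1; lia.
have q1 : 1 <= q by lia.
have nq : n = q.*2.+1 + q.*2 by lia.
subst n k h.
set p := q.*2.+1.
pose R : rel 'I_(p + q.*2) := fun u v => r3 q u v || r3 q v u.
have symR : symmetric R by move=> u v; rewrite /R orbC.
have irrR : irreflexive R.
  move=> u; rewrite /R orbb /r3 -/p; apply/negbTE.
  case: (ltnP u p) => up /=; last first.
    by apply/negP => /andP[_ /eqP]; lia.
  rewrite orbF (modS up); case: (u.+1 =P p) => e; apply/negP => /eqP; lia.
have rk : realizes_kn (q.+1).*2 (Eof R).
  apply: realize_rel => // v; exact: deg3.
set I := [set u : 'I_(p + q.*2) | u < p].
have cI : #|I| = p by apply: card_lt; lia.
have cS : #|~: I| = q.*2.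
  have := cardsC I; rewrite cI card_ord; lia.
exists (Eof R), [set e in Eof R | e \subset I]; split => //.
  apply: (mu_ub (I := I) (S := ~: I)).
  - by apply/subsetP => e; rewrite inE => /andP[].
  - by move=> v; rewrite !inE => ->.
  - by rewrite cI cS /p.
  - move=> e; rewrite !inE => /andP[/negP nE' eE] _; apply: notsub_meet.
    by apply/negP => sub; apply: nE'; rewrite eE sub.
pose g (u : 'I_(p + q.*2)) := [set u; insubd u (u.+1 %% p)].
apply: (leq_trans (_ : _ <= #|g @: I|)%N).
  apply: subset_leq_card; apply/subsetP => e; rewrite inE => /andP[/Eof_inP[a [b [rab ->]]]].
  rewrite subUset !sub1set !inE => /andP[aI bI].
  move: rab; rewrite /R /r3 -/p [p <= a]leqNgt [p <= b]leqNgt aI bI /= ?orbF => /orP[] /eqP ee.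
  - apply/imsetP; exists a; first by rewrite inE.
    congr [set _; _]; apply: val_inj; rewrite /= val_insubd; case: ifP => H //.
    by exfalso; move: H; have := @ltn_pmod a.+1 p isT; lia.
  - apply/imsetP; exists b; first by rewrite inE.
    rewrite setUC; congr [set _; _]; apply: val_inj; rewrite /= val_insubd; case: ifP => H //.
    by exfalso; move: H; have := @ltn_pmod b.+1 p isT; lia.
apply: leq_trans (leq_imset_card _ _) _.
by rewrite cI /p; lia.
Qed.


Theorem theorem26 (n k : nat) :
  (k < n)%N -> odd n -> ~~ odd k ->
  is_mu_low n k
    (if (n + 3 < 2 * k)%N then k
     else if (n + 3 == 2 * k)%N then k.-1
     else k./2).
Proof.
move=> kn on ek.
change (is_mu_low n k (mval n k)).
have [E [E' [rk mu cE']]] :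
    exists E E' : {set {set 'I_n}}, [/\ realizes_kn k E, mu_set E E' & (#|E'| <= mval n k)%N].
  rewrite /mval; case: ifP => h1; [|case: ifP => h2].
  - exact: constr1.
  - by apply: constr3 => //; apply/eqP.
  - apply: constr2 => //.
    have := odd_double_half n; rewrite on -addnn.
    move: h1 h2; rewrite ltnNge => /negbFE h1 /negbT h2; lia.
split.
- exists E; split => //; split.
    exists E'; split => //; apply/eqP; rewrite eqn_leq cE' /=.
    exact: (LB kn on ek rk mu).
  by move=> E'' mu''; exact: (LB kn on ek rk mu'').
- move=> E0 m' rk0 [[E1 [mu1 c1]] _]; rewrite -c1; exact: (LB kn on ek rk0 mu1).
Qed.
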